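(* Let $K$ be a field of characteristic $0$, let $E$ be the infinite-dimensional unitary Grassmann algebra over $K$ with even part $E_0$, let $A=\begin{pmatrix} E_0 & E\\ 0 & E\end{pmatrix}$, and let $F_n(A)=K\langle x_1,\dots,x_n\rangle/(K\langle x_1,\dots,x_n\rangle\cap T(A))$. Let $n\geq 2$ be even and $m\geq n+3$. Then the polynomial \[f_{m,n+1}^{(4)}=\sum_{\sigma\in S_{n+1}}(-1)^{\sigma}[x_2,x_1,x_{\sigma(1)},x_1,\dots,x_1][x_{\sigma(2)},x_{\sigma(3)}]\cdots[x_{\sigma(n)},x_{\sigma(n+1)}],\] where each first factor is the left-normed commutator of length $m-n$ consisting of $x_2,x_1,x_{\sigma(1)}$ followed by $m-n-3$ copies of $x_1$, is not a polynomial identity of $F_n(A)$.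
   Context: All algebras are associative and unitary over $K$; $T(A)$ is the ideal of polynomial identities of $A$. $E$ is generated by anticommuting $e_1,e_2,\dots$ and $E_0$ is the span of basis products of even length. Commutators: $[a,b]=ab-ba$, $[a_1,\dots,a_k]=[[a_1,\dots,a_{k-1}],a_k]$; $(-1)^\sigma$ is the sign of $\sigma$. The polynomial has total degree $m$. *)

(* Defs.v *)
From HB Require Import structures.
From mathcomp Require Import all_boot all_order all_algebra all_fingroup.
Set Implicit Arguments. Unset Strict Implicit. Unset Printing Implicit Defensive.
Import GRing.Theory.
Local Open Scope ring_scope.

(* The variable x_i is [NCVar i] (i >= 1). *)
Inductive ncterm (K : Type) : Type :=
| NCVar of nat
| NCConst of K
| NCAdd of ncterm K & ncterm K
| NCMul of ncterm K & ncterm K.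
Arguments NCVar {K}.

Fixpoint nceval (K : Type) (R : pzRingType) (c : K -> R) (v : nat -> R)
  (t : ncterm K) : R :=
  match t with
  | NCVar i => v i
  | NCConst k => c k
  | NCAdd t1 t2 => nceval c v t1 + nceval c v t2
  | NCMul t1 t2 => nceval c v t1 * nceval c v t2
  end.

Fixpoint ncsubst (K : Type) (g : nat -> ncterm K) (t : ncterm K) : ncterm K :=
  match t with
  | NCVar i => g i
  | NCConst k => NCConst k
  | NCAdd t1 t2 => NCAdd (ncsubst g t1) (ncsubst g t2)
  | NCMul t1 t2 => NCMul (ncsubst g t1) (ncsubst g t2)
  end.

Fixpoint ncvars_in (K : Type) (n : nat) (t : ncterm K) : bool :=
  match t with
  | NCVar i => (1 <= i <= n)%N
  | NCConst _ => true
  | NCAdd t1 t2 => ncvars_in n t1 && ncvars_in n t2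
  | NCMul t1 t2 => ncvars_in n t1 && ncvars_in n t2
  end.

Section Terms.
Variable K : pzRingType.
Definition ncopp (t : ncterm K) : ncterm K := NCMul (NCConst (-1)) t.
Definition nccomm (a b : ncterm K) : ncterm K :=
  NCAdd (NCMul a b) (ncopp (NCMul b a)).
Definition nclcomm (a : ncterm K) (s : seq (ncterm K)) : ncterm K :=
  foldl nccomm a s.

(* A permutation s of 'I_(n+1) = {0..n} encodes sigma via
   sigma(j) = (s (j-1)) + 1 for j in 1..n+1. *)
Definition sig_var (n : nat) (s : 'S_n.+1) (j : nat) : ncterm K :=
  NCVar (nat_of_ord (s (inord j.-1))).+1.

Definition f4 (m n : nat) : ncterm K :=
  \big[@NCAdd K / NCConst 0]_(s : 'S_n.+1)
    NCMul (NCConst ((-1) ^+ odd_perm s))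
      (NCMul
        (nclcomm (NCVar 2) (NCVar 1 :: sig_var s 1 :: nseq (m - n - 3) (NCVar 1)))
        (\big[@NCMul K / NCConst 1]_(k < n./2)
            nccomm (sig_var s (2 * k + 2)) (sig_var s (2 * k + 3)))).
End Terms.

Section Grassmann.
Variables (K : fieldType) (E : algType K).

Definition gmon (e : nat -> E) (s : seq nat) : E := \prod_(i <- s) e i.

Definition is_grassmann (e : nat -> E) : Prop :=
  [/\ forall i j, e i * e j = - (e j * e i),
      forall x : E, exists (S : seq (seq nat)) (c : seq nat -> K),
        all (sorted ltn) S /\ x = \sum_(s <- S) c s *: gmon e s
    & forall (S : seq (seq nat)) (c : seq nat -> K),
        uniq S -> all (sorted ltn) S ->
        \sum_(s <- S) c s *: gmon e s = 0 -> forall s, s \in S -> c s = 0].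

Definition grass_even (e : nat -> E) (x : E) : Prop :=
  exists (S : seq (seq nat)) (c : seq nat -> K),
    [/\ all (sorted ltn) S, all (fun s => ~~ odd (size s)) S &
        x = \sum_(s <- S) c s *: gmon e s].

(* A = [[E_0, E], [0, E]] inside 2x2 matrices over E. *)
Definition inA (e : nat -> E) (M : 'M[E]_2) : Prop :=
  M ord_max ord0 = 0 /\ grass_even e (M ord0 ord0).

Definition evalA (v : nat -> 'M[E]_2) (t : ncterm K) : 'M[E]_2 :=
  nceval (fun k : K => (k%:A)%:M) v t.

Definition in_TA (e : nat -> E) (t : ncterm K) : Prop :=
  forall v : nat -> 'M[E]_2, (forall i, inA e (v i)) -> evalA v t = 0.

(* f is a polynomial identity of F_n(A) = K<x_1..x_n>/(K<x_1..x_n> cap T(A)):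
   for all elements u_i = class of g_i (g_i in K<x_1..x_n>) of F_n(A),
   f(u_1, u_2, ...) = class of f(g_1, g_2, ...) is zero, i.e. lies in T(A). *)
Definition PI_Fn (e : nat -> E) (n : nat) (f : ncterm K) : Prop :=
  forall g : nat -> ncterm K, (forall i, ncvars_in n (g i)) ->
    in_TA e (ncsubst g f).
End Grassmann.

(* Main.v *)
Require Import Defs.
From HB Require Import structures.
From mathcomp Require Import all_boot all_order all_algebra all_fingroup.
From mathcomp Require Import zify.
Set Implicit Arguments. Unset Strict Implicit. Unset Printing Implicit Defensive.
Import GRing.Theory.
Local Open Scope ring_scope.


Lemma nceval_subst (K : Type) (R : pzRingType) (c : K -> R) (v : nat -> R)
  (g : nat -> ncterm K) t :
  nceval c v (ncsubst g t) = nceval c (fun i => nceval c v (g i)) t.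
Proof. by elim: t => //= t1 -> t2 ->. Qed.

Definition cmm (R : pzRingType) (a b : R) := a * b - b * a.

Section Ev.
Variables (K : pzRingType) (R : pzRingType) (c : K -> R) (w : nat -> R).
Hypotheses (c0 : c 0 = 0) (c1 : c 1 = 1) (cN1 : c (-1) = -1).

Lemma ev_comm a b : nceval c w (nccomm a b) = cmm (nceval c w a) (nceval c w b).
Proof. by rewrite /= cN1 mulN1r. Qed.

Lemma ev_lcomm a l : nceval c w (nclcomm a l) = foldl (@cmm R) (nceval c w a) (map (nceval c w) l).
Proof. by elim: l a => //= t l IH a; rewrite -ev_comm -IH. Qed.

Lemma ev_sum (I : Type) (r : seq I) (P : pred I) (F : I -> ncterm K) :
  nceval c w (\big[@NCAdd K/NCConst 0]_(i <- r | P i) F i) = \sum_(i <- r | P i) nceval c w (F i).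
Proof. by apply: (big_morph (nceval c w)) => //= ; rewrite c0. Qed.

Lemma ev_prod (I : Type) (r : seq I) (P : pred I) (F : I -> ncterm K) :
  nceval c w (\big[@NCMul K/NCConst 1]_(i <- r | P i) F i) = \prod_(i <- r | P i) nceval c w (F i).
Proof. by apply: (big_morph (nceval c w)) => //= ; rewrite c1. Qed.
End Ev.

Section Sc.
Variables (K : fieldType) (E : algType K).
Lemma scm0 : ((0 : K)%:A%:M : 'M[E]_2) = 0.
Proof. by rewrite scale0r; apply/matrixP => i j; rewrite !mxE mul0rn. Qed.
Lemma scm1 : ((1 : K)%:A%:M : 'M[E]_2) = 1.
Proof. by rewrite scale1r. Qed.
Lemma scmN1 : (((-1) : K)%:A%:M : 'M[E]_2) = -1.
Proof. by rewrite scaleN1r raddfN. Qed.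
Lemma scm_entry (k : K) (A : 'M[E]_2) i j : ((k%:A)%:M * A) i j = k *: A i j.
Proof. by rewrite -mulmxE mul_scalar_mx mxE mulr_algl. Qed.
End Sc.


Section Mat.
Variable E : pzRingType.
Notation M := ('M[E]_2).
Notation i0 := (ord0 : 'I_2).
Notation i1 := (ord_max : 'I_2).

Lemma mul2E (A B : M) i j : (A * B) i j = A i i0 * B i0 j + A i i1 * B i1 j.
Proof.
rewrite -mulmxE mxE !big_ord_recl big_ord0 addr0.
by have -> : lift ord0 ord0 = i1 by apply/val_inj.
Qed.

Definition ut (A : M) := A i1 i0 = 0.

Lemma subE (A B : M) i j : (A - B) i j = A i j - B i j.
Proof. by rewrite !mxE. Qed.

Lemma utM (A B : M) : ut A -> ut B -> ut (A * B).
Proof. by rewrite /ut mul2E => -> ->; rewrite mul0r mulr0 addr0. Qed.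
Lemma mul00 (A B : M) : ut B -> (A * B) i0 i0 = A i0 i0 * B i0 i0.
Proof. by rewrite /ut mul2E => ->; rewrite mulr0 addr0. Qed.
Lemma mul01 (A B : M) : (A * B) i0 i1 = A i0 i0 * B i0 i1 + A i0 i1 * B i1 i1.
Proof. by rewrite mul2E. Qed.
Lemma mul11 (A B : M) : ut A -> (A * B) i1 i1 = A i1 i1 * B i1 i1.
Proof. by rewrite /ut mul2E => ->; rewrite mul0r add0r. Qed.

Lemma utC (A B : M) : ut A -> ut B -> ut (cmm A B).
Proof. by move=> a b; rewrite /ut /cmm subE !(utM a b, utM b a) subr0. Qed.
Lemma cmm00 (A B : M) : ut A -> ut B -> (cmm A B) i0 i0 = A i0 i0 * B i0 i0 - B i0 i0 * A i0 i0.
Proof. by move=> a b; rewrite /cmm subE !mul00. Qed.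
Lemma cmm01 (A B : M) : (cmm A B) i0 i1 =
  A i0 i0 * B i0 i1 + A i0 i1 * B i1 i1 - (B i0 i0 * A i0 i1 + B i0 i1 * A i1 i1).
Proof. by rewrite /cmm subE !mul01. Qed.
Lemma cmm11 (A B : M) : ut A -> ut B -> (cmm A B) i1 i1 = A i1 i1 * B i1 i1 - B i1 i1 * A i1 i1.
Proof. by move=> a b; rewrite /cmm subE !mul11. Qed.

Lemma ut1 : ut 1.
Proof. by rewrite /ut mxE. Qed.
Lemma one11 : (1 : M) i1 i1 = 1.
Proof. by rewrite mxE. Qed.
Lemma one00 : (1 : M) i0 i0 = 1.
Proof. by rewrite mxE. Qed.
Lemma one01 : (1 : M) i0 i1 = 0.
Proof. by rewrite mxE. Qed.
Lemma utB (A B : M) : ut A -> ut B -> ut (A - B).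
Proof. by rewrite /ut subE => -> ->; rewrite subr0. Qed.

Lemma prod_ut (I : Type) (r : seq I) (P : pred I) (F : I -> M) :
  (forall i, P i -> ut (F i)) ->
  ut (\prod_(i <- r | P i) F i) /\
  (\prod_(i <- r | P i) F i) i1 i1 = \prod_(i <- r | P i) (F i i1 i1).
Proof.
move=> hF; apply: (big_rec2 (fun X y => ut X /\ X i1 i1 = y)).
  by split; [apply: ut1 | apply: one11].
move=> i X y Pi [uX eX]; split; first exact: utM (hF i Pi) uX.
by rewrite mul11 ?eX //; apply: hF.
Qed.

Definition mk (a b c : E) : M :=
  \matrix_(i, j) if i == i0 then (if j == i0 then a else b) else (if j == i0 then 0 else c).
Lemma mk_ut a b c : ut (mk a b c). Proof. by rewrite /ut mxE. Qed.
Lemma mk00 a b c : mk a b c i0 i0 = a. Proof. by rewrite mxE. Qed.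
Lemma mk01 a b c : mk a b c i0 i1 = b. Proof. by rewrite mxE. Qed.
Lemma mk11 a b c : mk a b c i1 i1 = c. Proof. by rewrite mxE. Qed.
Lemma mkE (A : M) : ut A -> A = mk (A i0 i0) (A i0 i1) (A i1 i1).
Proof.
move=> uA; apply/matrixP => i j; rewrite mxE.
have h (k : 'I_2) : k = i0 \/ k = i1.
  by case: k => [[|[|]]] //= ?; [left|right]; apply/val_inj.
by case: (h i) => ->; case: (h j) => ->.
Qed.
End Mat.


Section Perm.
Variable n : nat.
Definition ulsf i (s : 'S_n.+1) (k : 'I_n) : 'I_n := odflt k (unlift (s i) (s (lift i k))).
Lemma ulsfK i (s : 'S_n.+1) k: lift (s i) (ulsf i s k) = s (lift i k).
Proof.
rewrite /ulsf; have:= neq_lift i k.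
by rewrite -(can_eq (permK s)) => /unlift_some[] ? ? ->.
Qed.
Lemma inj_ulsf i (s : 'S_n.+1) : injective (ulsf i s).
Proof.
apply: can_inj (ulsf (s i) s^-1%g) _ => k'.
by rewrite {1}/ulsf ulsfK !permK liftK.
Qed.
Lemma lift_perm_decomp i (s : 'S_n.+1) :
  s = lift_perm i (s i) (perm (@inj_ulsf i s)).
Proof.
apply/permP=> k.
case: (unliftP i k) => [k'|] ->; rewrite ?lift_perm_id //.
by rewrite lift_perm_lift permE ulsfK.
Qed.
Lemma sum_lift_perm (V : nmodType) i j (F : 'S_n.+1 -> V) :
  \sum_(s : 'S_n.+1 | s i == j) F s = \sum_(s' : 'S_n) F (lift_perm i j s').
Proof.
rewrite (reindex (lift_perm i j)); last first.
  exists (fun s => perm (@inj_ulsf i s)) => [s _ | s].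
    by apply/permP=> k'; rewrite permE /ulsf lift_perm_lift lift_perm_id liftK.
  by move/eqP => si; apply/esym; rewrite {1}(lift_perm_decomp i s) si.
by apply: eq_bigl => s; rewrite lift_perm_id eqxx.
Qed.
End Perm.

Section Sign.
Variable E : pzRingType.

Definition anticomm (f : nat -> E) := forall i j, f i * f j = - (f j * f i).

Lemma sign_comm (b : bool) (x : E) : (-1) ^+ b * x = x * (-1) ^+ b.
Proof. by case: b; rewrite ?expr0 ?expr1 ?mul1r ?mulr1 ?mulN1r ?mulrN1. Qed.

Lemma move_front f a j : anticomm f ->
  f a * \prod_(0 <= k < j) f k = (-1) ^+ j * (\prod_(0 <= k < j) f k * f a).
Proof.
move=> hf; elim: j => [|j IH]; first by rewrite big_geq // expr0 !mul1r mulr1.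
rewrite big_nat_recr //= mulrA IH -!mulrA hf.
by rewrite exprS mulN1r mulNr !mulrN.
Qed.

Lemma shift_prod f j N : anticomm f -> (j <= N)%N ->
  f j * \prod_(k < N) f (bump j k) = (-1) ^+ j * \prod_(i < N.+1) f i.
Proof.
move=> hf jN.
rewrite -(big_mkord xpredT (fun k => f (bump j k))) -(big_mkord xpredT f).
rewrite (big_cat_nat (leq0n j) jN) /=.
rewrite (big_cat_nat (leq0n j) (leqW jN)) /=.
rewrite [X in _ = _ * (_ * X)]big_ltn ?ltnS //.
rewrite mulrA (eq_big_nat _ _ (F1 := fun k => f (bump j k)) (F2 := f)); last first.
  by move=> k /andP[_ kj]; rewrite /bump leqNgt kj.
rewrite move_front // -!mulrA; congr (_ * (_ * (_ * _))).
rewrite big_add1 /=; apply: eq_big_nat => k /andP[jk _].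
by rewrite /bump jk add1n.
Qed.

Lemma sign_prod N (f : nat -> E) : anticomm f -> forall s : 'S_N,
  \prod_(i < N) f (s i) = (-1) ^+ odd_perm s * \prod_(i < N) f i.
Proof.
elim: N f => [|N IH] f hf s.
  have -> : s = 1%g by apply/permP => -[].
  by rewrite !big_ord0 odd_perm1 expr0 mul1r.
rewrite (lift_perm_decomp ord0 s).
move: (s ord0) (perm _) => j s'.
rewrite big_ord_recl lift_perm_id.
rewrite (eq_bigr (fun k => f (bump j (s' k)))); last first.
  by move=> k _; rewrite lift_perm_lift.
rewrite (IH (fun x => f (bump j x))); last by move=> a b; apply: hf.
rewrite mulrA -sign_comm -mulrA shift_prod //; last by rewrite -ltnS.
rewrite odd_lift_perm /= signr_addb.
rewrite mulrA; congr (_ * _); by rewrite -(signr_odd _ j) -!signr_addb addbC.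
Qed.
End Sign.

Lemma mk_mul (E : pzRingType) (a b c a' b' c' : E) :
  mk a b c * mk a' b' c' = mk (a * a') (a * b' + b * c') (c * c').
Proof.
apply/matrixP => i j; rewrite mul2E !mxE.
by case: (i == ord0); case: (j == ord0) => //=; rewrite ?(mulr0, mul0r, addr0, add0r).
Qed.
Lemma mk_sub (E : pzRingType) (a b c a' b' c' : E) :
  mk a b c - mk a' b' c' = mk (a - a') (b - b') (c - c').
Proof.
apply/matrixP => i j; rewrite subE !mxE.
by case: (i == ord0); case: (j == ord0) => //=; rewrite subr0.
Qed.
Lemma mk_one (E : pzRingType) : (1 : 'M[E]_2) = mk 1 0 1.
Proof. by rewrite (mkE (ut1 E)) one00 one01 one11. Qed.
Lemma mk_cmm (E : pzRingType) (a b c a' b' c' : E) :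
  cmm (mk a b c) (mk a' b' c') =
  mk (a * a' - a' * a) (a * b' + b * c' - (a' * b + b' * c)) (c * c' - c' * c).
Proof. by rewrite /cmm !mk_mul mk_sub. Qed.

Definition top0 (E : pzRingType) (A : 'M[E]_2) := ut A /\ A ord0 ord0 = 0.
Lemma top0C (E : pzRingType) (A B : 'M[E]_2) : top0 A -> ut B -> top0 (cmm A B).
Proof.
move=> [uA A0] uB; split; first exact: utC.
by rewrite cmm00 // A0 mul0r mulr0 subrr.
Qed.
Lemma top0_fold (E : pzRingType) (A : 'M[E]_2) l : top0 A ->
  (forall Y, Y \in l -> ut Y) -> top0 (foldl (@cmm _) A l).
Proof.
elim: l A => //= Y l IH A hA hl; apply: IH => [|Z Zl]; last by apply: hl; rewrite inE Zl orbT.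
by apply: top0C => //; apply: hl; rewrite inE eqxx.
Qed.
Lemma top0_mul01 (E : pzRingType) (A Q : 'M[E]_2) : top0 A ->
  (A * Q) ord0 ord_max = A ord0 ord_max * Q ord_max ord_max.
Proof. by case=> _ A0; rewrite mul01 A0 mul0r add0r. Qed.

Lemma prod_zero (R : pzRingType) (I : eqType) (r : seq I) (F : I -> R) x :
  x \in r -> F x = 0 -> \prod_(i <- r) F i = 0.
Proof.
elim: r => // a r IH; rewrite inE big_cons => /orP[/eqP <- -> | xr Fx].
  by rewrite mul0r.
by rewrite IH ?mulr0.
Qed.

Lemma prod_zero_ord (R : pzRingType) h (F : 'I_h -> R) j :
  F j = 0 -> \prod_(i < h) F i = 0.
Proof. by move=> Fj; apply: (prod_zero (x:=j)) => //; exact: mem_index_enum. Qed.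

Lemma fold_w1 (E : pzRingType) (x b : E) k :
  foldl (@cmm _) (mk 0 b 0) (nseq k (mk (-1) 0 x)) = mk 0 (b * (1 + x) ^+ k) 0.
Proof.
elim: k b => [|k IH] b /=; first by rewrite expr0 mulr1.
rewrite mk_cmm !(mulr0, mul0r, subrr, addr0, add0r, mulN1r, opprK, oppr0) IH.
by rewrite exprS mulrA mulrDr mulr1 addrC.
Qed.

Lemma absorb (E : pzRingType) (x P : E) k : x * P = 0 -> (1 + x) ^+ k * P = P.
Proof.
move=> xP; elim: k => [|k IH]; first by rewrite expr0 mul1r.
by rewrite exprSr -mulrA mulrDl mul1r xP addr0 IH.
Qed.

Lemma mk_eq (E : pzRingType) (A : 'M[E]_2) a b c : ut A -> A ord0 ord0 = a ->
  A ord0 ord_max = b -> A ord_max ord_max = c -> A = mk a b c.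
Proof. by move=> uA <- <- <-; apply: mkE. Qed.

Lemma prod_mulrn2 (R : pzRingType) (x : nat -> R) h :
  \prod_(k < h) (x k *+ 2) = (\prod_(k < h) x k) *+ (2 ^ h).
Proof.
elim: h => [|h IH]; first by rewrite !big_ord0 expn0 mulr1n.
by rewrite !big_ord_recr /= IH mulrnAl mulrnAr -mulrnA expnS.
Qed.

Lemma pair_prod (R : pzRingType) (F : nat -> R) h :
  \prod_(k < h) (F (2 * k)%N * F (2 * k + 1)%N) = \prod_(i < 2 * h) F i.
Proof.
elim: h => [|h IH]; first by rewrite !big_ord0.
rewrite big_ord_recr /= IH mulnS addSn add1n !big_ord_recr /= mulrA.
by rewrite addn1.
Qed.

Theorem lemma3p8 (K : fieldType) (E : algType K) (e : nat -> E) (n m : nat) :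
  [pchar K] =i pred0 ->
  is_grassmann e ->
  (2 <= n)%N -> ~~ odd n -> (n + 3 <= m)%N ->
  ~ PI_Fn e n (f4 K m n).
Proof.
move=> ch0 [anti _ indep] n2 nodd mn3 PI.
move/pcharf0P: ch0 => c2.
have ee i : e i * e i = 0.
  have := anti i i; move/eqP; rewrite -subr_eq0 opprK -mulr2n -scaler_nat scaler_eq0 c2 /=.
  by move/eqP.
pose d (i : nat) : E := if i == 1%N then -1 else 0.
pose u (i : nat) : E := if i == 2%N then 1 else 0.
pose r (i : nat) : E := if i == n.+1 then 1 else e i.
pose v (i : nat) := mk (d i) (u i) (e i).
pose gn := NCAdd (NCConst (1 : K)) (ncopp (NCMul (@NCVar K 1) (NCVar 1))).
pose g (i : nat) : ncterm K :=
  if i == n.+1 then gn else if (1 <= i <= n)%N then NCVar i else NCConst 0.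
have hg i : ncvars_in n (g i).
  rewrite /g; case: (i == n.+1); first by rewrite /= (ltnW n2).
  by case: ifP.
have hv i : inA e (v i).
  split; first exact: mk_ut.
  rewrite mk00 /d; case: eqP => _.
    exists [:: [::]], (fun _ => -1); split => //.
    by rewrite big_seq1 /gmon big_nil scaleN1r.
  by exists [::], (fun _ => 0); split => //; rewrite big_nil.
have H := PI g hg v hv.
rewrite /evalA nceval_subst in H.
pose c := fun k : K => ((k%:A)%:M : 'M[E]_2).
pose w := fun i => nceval c v (g i).
change (nceval c w (f4 K m n) = 0) in H.
have hw j : (0 < j <= n.+1)%N -> w j = mk (d j) (u j) (r j).
  case/andP=> j0 jn; rewrite /w /g /r; case: eqP => [->|/eqP jn1].
    rewrite /= /c scm1 scmN1 mulN1r.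
    have -> : d n.+1 = 0 by rewrite /d ifF //; apply/negbTE; rewrite eqSS -lt0n ltnW.
    have -> : u n.+1 = 0 by rewrite /u ifF //; apply/negbTE; rewrite eqSS neq_ltn n2 orbT.
    have hv1 : v 1%N = mk (-1) 0 (e 1%N) by rewrite /v /d /u.
    by rewrite hv1 mk_mul mk_one mk_sub ee mulrNN mulr1 subrr mulr0 mul0r addr0 !subr0.
  rewrite ifT /=; last by rewrite j0 -ltnS ltn_neqAle jn1 jn.
  by [].
have := congr1 (fun A : 'M[E]_2 => A ord0 ord_max) H.
rewrite [RHS]mxE /f4 (ev_sum (c:=c) w (scm0 E)) summxE.
pose Xf (s : 'S_n.+1) := nceval c w
   (nclcomm (NCVar 2) [:: NCVar 1, sig_var K s 1 & nseq (m - n - 3) (NCVar 1)]).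
pose Qf (s : 'S_n.+1) := nceval c w (\big[@NCMul K/NCConst 1]_(k < n./2)
   nccomm (sig_var K s (2 * k + 2)) (sig_var K s (2 * k + 3))).
rewrite (eq_bigr (fun s : 'S_n.+1 => ((-1) ^+ odd_perm s : K) *: (Xf s * Qf s) ord0 ord_max)); last first.
  by move=> s _; exact: scm_entry.
have wut j : (0 < j <= n.+1)%N -> ut (w j) by move=> hj; rewrite hw //; exact: mk_ut.
have wsut (s : 'S_n.+1) x : ut (w (s x).+1) by apply: wut; rewrite /= ltn_ord.
have w1 : w 1%N = mk (-1) 0 (e 1%N).
  rewrite hw //=.
  by rewrite /r ifF // ltn_eqF // ltnS ltnW.
have w2 : w 2%N = mk 0 1 (e 2%N).
  rewrite hw //=; last by rewrite ltnS ltnW.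
  by rewrite /r ifF // ltn_eqF // ltnS.
have hX s : top0 (Xf s).
  rewrite /Xf (ev_lcomm (c:=c) w (scmN1 E)) /= map_nseq.
  apply: top0_fold.
    apply: top0C; last exact: wsut.
    apply: top0C; last by rewrite w1; apply: mk_ut.
    by rewrite w2; split; [apply: mk_ut | apply: mk00].
  by move=> Y /nseqP [-> _]; apply: (wut 1%N).
have hQ s : ut (Qf s) /\ Qf s ord_max ord_max = \prod_(k < n./2)
   cmm (r (s (inord (2 * k + 2).-1)).+1) (r (s (inord (2 * k + 3).-1)).+1).
  rewrite /Qf (ev_prod (c:=c) w (scm1 E)).
  rewrite (eq_bigr _ (fun k _ => ev_comm (c:=c) w (scmN1 E) _ _)) /=.
  have [uQ ->] := @prod_ut E 'I_n./2 (index_enum _) xpredT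
     (fun k : 'I_n./2 => cmm (w (s (inord (2 * k + 2).-1)).+1) (w (s (inord (2 * k + 3).-1)).+1))
     (fun k _ => utC (wsut _ _) (wsut _ _)).
  split => //; apply: eq_bigr => k _.
  by rewrite cmm11 // !hw ?mk11 //= ltnS ltnW.
rewrite (eq_bigr (fun s : 'S_n.+1 => ((-1) ^+ odd_perm s : K) *: (Xf s ord0 ord_max *
   \prod_(k < n./2) cmm (r (s (inord (2 * k + 2).-1)).+1) (r (s (inord (2 * k + 3).-1)).+1))));
   last by move=> s _; rewrite top0_mul01 // (proj2 (hQ s)).
rewrite (bigID (fun s : 'S_n.+1 => s ord0 == ord_max)) /=.
rewrite [X in _ + X]big1 ?addr0; last first.
  move=> s hs.
  pose i := (s^-1)%g ord_max.
  have si : s i = ord_max by rewrite /i permKV.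
  have i0 : (0 < i)%N.
    rewrite lt0n; apply/negP => /eqP i0; move: hs; rewrite -si.
    by rewrite (_ : i = ord0) ?eqxx //; apply/val_inj.
  have iin : (i <= n)%N by rewrite -ltnS ltn_ord.
  pose k := (i.-1)./2.
  have nh : n = (n./2).*2 by rewrite -[LHS]odd_double_half (negbTE nodd).
  have ik : i.-1 = (k.*2 + odd i.-1)%N by rewrite /k addnC odd_double_half.
  have kh : (k < n./2)%N.
    move: ik nh i0 iin; rewrite -!muln2; case: (odd _) => /=; lia.
  rewrite (prod_zero_ord (j := Ordinal kh)) ?mulr0 ?scaler0 //=.
  have ri : r (s i).+1 = 1 by rewrite si /r eqxx.
  move: ik; rewrite -muln2; case: (odd i.-1) => /= ik.
    have -> : inord (2 * k + 3).-1 = i :> 'I_n.+1.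
      apply/val_inj; rewrite /= inordK; lia.
    by rewrite ri /cmm mulr1 mul1r subrr.
  have -> : inord (2 * k + 2).-1 = i :> 'I_n.+1.
    apply/val_inj; rewrite /= inordK; lia.
  by rewrite ri /cmm mulr1 mul1r subrr.
rewrite sum_lift_perm.
have wn : w n.+1 = mk 0 0 1.
  rewrite hw ?leqnn // /r eqxx /d /u !gtn_eqF // ltnS ltnW //.
pose P := \prod_(i < n) e i.+1.
pose k3 := (m - n - 3)%N.
have hX1 (s' : 'S_n) : Xf (lift_perm ord0 ord_max s') ord0 ord_max = (1 + e 1%N) ^+ k3.+1.
  rewrite /Xf (ev_lcomm (c:=c) w (scmN1 E)) /= map_nseq.
  have -> : inord 0 = ord0 :> 'I_n.+1 by apply/val_inj; rewrite /= inordK.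
  rewrite lift_perm_id /= wn w1 w2 !mk_cmm.
  rewrite !(mulr0, mul0r, subrr, addr0, add0r, mulN1r, opprK, mulr1, mul1r, subr0).
  by rewrite oppr0 fold_w1 mk01 exprS [e 1%N + 1]addrC.
have n0 : (0 < n)%N by rewrite ltnW.
pose io (i : nat) : 'I_n := insubd (Ordinal n0) i.
have ioE i : (i < n)%N -> (io i : nat) = i by move=> hi; rewrite val_insubd hi.
have hsv (s' : 'S_n) j : (j < n)%N ->
    (lift_perm ord0 ord_max s' (inord j.+1) : nat) = s' (io j).
  move=> jn; have -> : inord j.+1 = lift ord0 (io j) :> 'I_n.+1.
    by apply/val_inj; rewrite /= /bump /= add1n ioE // inordK.
  by rewrite lift_perm_lift /= /bump leqNgt ltn_ord /= add0n.
have rE x : (x < n)%N -> r x.+1 = e x.+1.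
  by move=> xn; rewrite /r ifF // eqSS ltn_eqF.
have nh : n = (n./2).*2 by rewrite -[LHS]odd_double_half (negbTE nodd).
have hQ1 (s' : 'S_n) : \prod_(k < n./2)
    cmm (r (lift_perm ord0 ord_max s' (inord (2 * k + 2).-1)).+1)
        (r (lift_perm ord0 ord_max s' (inord (2 * k + 3).-1)).+1)
    = ((-1) ^+ odd_perm s' * P) *+ 2 ^ n./2.
  pose F (i : nat) := e (s' (io i)).+1.
  rewrite (eq_bigr (fun k : 'I_n./2 => (F (2 * k) * F (2 * k + 1)) *+ 2)%N); last first.
    move=> k _; have k2 : (2 * k + 1 < n)%N by move: (ltn_ord k) nh; rewrite -muln2; lia.
    rewrite (_ : ((2 * k + 2).-1 = (2 * k).+1)%N); last by lia.
    rewrite (_ : ((2 * k + 3).-1 = (2 * k + 1).+1)%N); last by lia.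
    rewrite hsv; last lia.
    rewrite hsv; last lia.
    rewrite !rE ?ltn_ord //.
    by rewrite /cmm [X in _ - X]anti opprK mulr2n.
  rewrite (_ : \prod_(k < n./2) _ = (\prod_(k < n./2) (F (2 * k)%N * F (2 * k + 1)%N)) *+ 2 ^ n./2);
    last exact: (prod_mulrn2 (fun j => F (2 * j)%N * F (2 * j + 1)%N)).
  rewrite (pair_prod F).
  rewrite -(big_mkord xpredT F) (_ : (2 * n./2)%N = n); last by rewrite {2}nh -muln2 mulnC.
  rewrite big_mkord.
  congr (_ *+ _); rewrite /P -(sign_prod (f := fun x => e x.+1)); last by move=> a b; apply: anti.
  apply: eq_bigr => i _; rewrite /F; congr (e (s' _).+1).
  by apply: ord_inj; rewrite ioE.
have eP : e 1%N * P = 0.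
  by rewrite /P -(big_mkord xpredT (fun i => e i.+1)) big_ltn // mulrA ee mul0r.
have PN : P != 0.
  apply/eqP => P0.
  have h1 : (1 : K) = 0.
    apply: (indep [:: iota 1 n] (fun _ => 1) _ _ _ (iota 1 n)) => //.
    - by rewrite /= iota_ltn_sorted.
    - rewrite big_seq1 scale1r /gmon -P0 /P -(big_mkord xpredT (fun i => e i.+1)).
      have -> : iota 1 n = index_iota 1 n.+1 by rewrite /index_iota subSS subn0.
      by rewrite big_add1.
    - by rewrite mem_head.
  by move/eqP: h1; rewrite oner_eq0.
rewrite (eq_bigr (fun _ => P *+ 2 ^ n./2)); last first.
  move=> s' _; rewrite hX1 hQ1 odd_lift_perm /= (negbTE nodd) /=.
  rewrite mulrnAr mulrA -sign_comm -mulrA absorb //.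
  case: (odd_perm s') => /=; last by rewrite expr0 scale1r mul1r.
  by rewrite expr1 scaleN1r mulN1r mulNrn opprK.
rewrite sumr_const card_Sn -mulrnA -scaler_nat => /eqP.
rewrite scaler_eq0 c2 (negbTE PN) orbF muln_eq0 expn_eq0 /=.
by rewrite eqn0Ngt fact_gt0.
Qed.
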